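(* Let $T:\mathbb{Z}_{\ge 0}\to\mathbb{R}$ satisfy $T(mn) = T(m)T(n) + T(m-1)T(n-1)$ for all integers $m,n\ge 1$. If $T(0)\neq 0$, then $T(n)=\tfrac12$ for all $n\ge 0$. *)

(* Defs.v *)
From Stdlib Require Import Reals.

(* Main.v *)
Require Import Defs.
From Stdlib Require Import Reals.
From Stdlib Require Import Lra Lia Psatz.
Open Scope R_scope.

Theorem lemma8 (T : nat -> R)
  (hT : forall m n : nat, (1 <= m)%nat -> (1 <= n)%nat ->
          T (m * n)%nat = T m * T n + T (m - 1)%nat * T (n - 1)%nat)
  (h0 : T 0%nat <> 0) :
  forall n : nat, T n = 1 / 2.
Proof.
  pose (a := (T 0%nat)). pose (b := (T 1%nat)).
  assert (Hs : forall m, T (S m) * (1 - b) = a * T m).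
  { intro m. pose proof (hT (S m) 1%nat ltac:(lia) ltac:(lia)) as H.
    replace (S m * 1)%nat with (S m) in H by lia.
    replace (S m - 1)%nat with m in H by lia.
    simpl in H. fold a b in H. lra. }
  assert (hb : b = b*b + a*a).
  { pose proof (Hs 0%nat) as H. fold b a in H. lra. }
  assert (hb1 : 1 - b <> 0).
  { intro E. assert (a*a = 0) by nra. apply h0. fold a. nra. }
  pose (r := a / (1 - b)).
  assert (HT : forall n, T n = a * r ^ n).
  { induction n. simpl. fold a. ring.
    pose proof (Hs n) as H.
    assert (T (S n) = r * T n) as ->.
    { unfold r. apply (Rmult_eq_reg_r (1 - b)); [|exact hb1].
      rewrite H. field. exact hb1. }
    rewrite IHn. simpl. ring. }
  assert (E1 : r = a*r*r + a).
  { assert (b = a * r) by (unfold b; rewrite (HT 1%nat); simpl; ring). rewrite H in hb.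
    apply (Rmult_eq_reg_l a); [|exact h0]. nra. }
  assert (E2 : a*r^4 = a*r^2*(a*r^2) + a*r*(a*r)).
  { pose proof (hT 2%nat 2%nat ltac:(lia) ltac:(lia)) as H. simpl in H.
    rewrite !HT in H. simpl in H. simpl. nra. }
  assert (E3 : r^4 = r^3).
  { apply (Rmult_eq_reg_l a); [|exact h0].
    assert (r^4 = a*r^4 + a*r^2).
    { apply (Rmult_eq_reg_l a); [|exact h0]. simpl in *. nra. }
    simpl in *. nra. }
  assert (hr : r <> 0).
  { intro Z. rewrite Z in E1. apply h0. fold a. lra. }
  assert (r = 1).
  { assert (r^3 * (r - 1) = 0) by (simpl in *; nra).
    apply Rmult_integral in H. destruct H as [H|H].
    - exfalso. apply hr. simpl in H. rewrite Rmult_1_r in H. apply Rmult_integral in H as [H|H]; [exact H|]. apply Rmult_integral in H as [H|H]; exact H.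
    - lra. }
  intro n. rewrite HT, H, pow1. rewrite H in E1. lra.
Qed.
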